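(* Let $G$ be a finite directed graph. If $R\subseteq V(G)$ is nonempty and $\mathrm{DT}_R(G)$ has more than one maximal face, then there is an edge $(x\rightarrow y)\in E(G)$ which is nice in $\mathrm{DT}_R(G)$.
   Context: A directed forest in $G$ is a set of edges of $G$ which, viewed as a graph on $V(G)$, is acyclic and has at most one edge directed to each vertex; its roots are the vertices with no forest edge directed to them. $\mathrm{DT}(G)$ is the simplicial complex with vertex set $E(G)$ whose simplices are the directed forests; $\mathrm{DT}_R(G)$ is the subcomplex generated by the directed forests with root set exactly $R$. An edge $(x\rightarrow y)$ of $G$ is nice in a subcomplex $\Delta$ of $\mathrm{DT}(G)$ if (i) there is an edge $(z\rightarrow y)$ in $\Delta$ with $z\ne x$, and (ii) every forest $F\in\Delta$ without an edge directed to $y$ satisfies $F\cup\{(x\rightarrow y)\}\in\Delta$. *)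

(* Defs.v *)
From mathcomp Require Import all_boot.
Set Implicit Arguments. Unset Strict Implicit. Unset Printing Implicit Defensive.

(* A finite directed graph G: vertex type V : finType (V(G)), edge set
   E : {set V * V} (E(G)); the pair (x, y) is the directed edge x -> y.
   Sets of edges are F : {set V * V}. *)

Section DT.
Variable V : finType.

Definition joins (e : V * V) (a b : V) : bool :=
  (e == (a, b)) || (e == (b, a)).

(* F contains a cycle of the underlying (undirected multi)graph on V:
   a closed trail v_0, e_0, v_1, ..., v_{k-1}, e_{k-1}, v_0 with k >= 1,
   pairwise distinct vertices v_i and pairwise distinct edges e_i in F,
   where e_i joins v_i and v_{(i+1) mod k}. *)
Definition has_cycle (F : {set V * V}) : Prop :=
  exists (v0 : V) (vs : seq V) (es : seq (V * V)),
    [/\ size es = size vs, 0 < size vs, uniq vs, uniq es &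
      forall i, i < size vs ->
        let e := nth (v0, v0) es i in
        (e \in F) && joins e (nth v0 vs i) (nth v0 vs (i.+1 %% size vs))].

Definition acyclic (F : {set V * V}) : Prop := ~ has_cycle F.

Definition indeg_le1 (F : {set V * V}) : Prop :=
  forall y : V, #|[set e in F | e.2 == y]| <= 1.

Definition directed_forest (E F : {set V * V}) : Prop :=
  [/\ F \subset E, acyclic F & indeg_le1 F].

Definition roots (F : {set V * V}) : {set V} :=
  [set v | [forall e in F, e.2 != v]].

(* A subcomplex of DT(G) is represented by its set of faces (a predicate on
   edge sets). *)
Definition complex := {set V * V} -> Prop.

Definition DT (E : {set V * V}) : complex := fun F => directed_forest E F.

(* DT_R(G): subcomplex generated by the directed forests with root set
   exactly R, i.e. faces are subsets of such forests. *)
Definition DT_R (E : {set V * V}) (R : {set V}) : complex :=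
  fun F => exists F', [/\ directed_forest E F', roots F' = R & F \subset F'].

Definition maximal_face (D : complex) (F : {set V * V}) : Prop :=
  D F /\ forall F', D F' -> F \subset F' -> F' = F.

Definition has_several_maximal_faces (D : complex) : Prop :=
  exists F1 F2, [/\ maximal_face D F1, maximal_face D F2 & F1 != F2].

Definition nice (D : complex) (x y : V) : Prop :=
  (exists z, z != x /\ D [set (z, y)]) /\
  (forall F, D F -> [forall e in F, e.2 != y] -> D (F :|: [set (x, y)])).

End DT.

(* Main.v *)
Require Import Defs.
From mathcomp Require Import all_boot.
From mathcomp Require Import zify.
From Stdlib Require Import Classical ClassicalEpsilon.

Set Implicit Arguments. Unset Strict Implicit. Unset Printing Implicit Defensive.

Section Aux.
Variable V : finType.
Implicit Types S : {set V * V}.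

Definition par S (v : V) : V :=
  if [pick e in S | e.2 == v] is Some e then e.1 else v.

Lemma rootsP S v : reflect (forall e, e \in S -> e.2 != v) (v \in Defs.roots S).
Proof.
rewrite inE; apply: (iffP forallP) => H e.
- by move=> eS; exact: (implyP (H e)).
- by apply/implyP; exact: H.
Qed.

Lemma parP S v : v \notin Defs.roots S -> (par S v, v) \in S.
Proof.
rewrite /par; case: pickP => [e /andP [eS /eqP <-] | H] Hv.
  by case: e eS Hv.
case/negP: Hv; apply/rootsP => e eS.
by have := H e; rewrite eS /= => /negbT.
Qed.

Lemma par_uniq S u v : indeg_le1 S -> (u, v) \in S -> par S v = u.
Proof.
move=> Hd uv; rewrite /par; case: pickP => [e /andP [eS /eqP ev]|H].
  have -> // : e = (u, v).
  apply: (card_le1_eqP (Hd v)); by rewrite inE ?eS ?uv ?ev /=.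
by have := H (u, v); rewrite uv eqxx.
Qed.

Lemma par_root S v : v \in Defs.roots S -> par S v = v.
Proof.
move/rootsP => Hv; rewrite /par; case: pickP => [e /andP [eS ev]|//].
by have := Hv e eS; rewrite ev.
Qed.

Lemma par_term S : Defs.acyclic S -> forall v, exists n, iter n (par S) v \in Defs.roots S.
Proof.
move=> Hac v; apply: NNPP => Hn.
have Hnr : forall n, iter n (par S) v \notin Defs.roots S.
  by move=> n; apply/negP => H; apply: Hn; exists n.
set f := par S.
have [m Hm] : exists m, fcycle f (orbit f (iter m f v)).
  apply: NNPP => Hc.
  have Ho : forall n, order f (iter n f v) + n = order f v.
    elim=> [|n IH]; first by rewrite addn0.
    case: (@orderPcycle _ f (iter n f v)) => [Hcy _|_ Heq].
      by exfalso; apply: Hc; exists n.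
    by rewrite iterS addnS -addSn -Heq.
  have := Ho (order f v); have := order_gt0 f (iter (order f v) f v); lia.
set w := iter m f v.
have Hw : iter (order f w) f w = w by move/(orbitPcycle 0 4): Hm.
have Hwr : forall i, iter i f w \notin Defs.roots S.
  by move=> i; rewrite /w -iterD; apply: Hnr.
apply: Hac; set k := order f w.
exists w, (orbit f w), (map (fun u => (f u, u)) (orbit f w)); split.
- by rewrite size_map.
- by rewrite size_orbit order_gt0.
- exact: orbit_uniq.
- by rewrite map_inj_uniq ?orbit_uniq // => a b [_ ->].
move=> i; rewrite size_orbit => Hi /=.
rewrite (nth_map w) ?size_orbit // /orbit nth_traject //.
have Hnext : nth w (traject f w k) (i.+1 %% k) = f (iter i f w).
  case: (ltngtP i.+1 k) => [lt|gt|eq].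
  - by rewrite modn_small // nth_traject.
  - lia.
  - rewrite eq modnn nth_traject ?order_gt0 //= -iterS eq.
    by rewrite /k Hw.
by rewrite Hnext parP ?Hwr //= /joins eqxx orbT.
Qed.

Lemma argmax_nat (g : nat -> nat) k : 0 < k ->
  exists i, i < k /\ forall j, j < k -> g j <= g i.
Proof.
elim: k => // k IH _; case: k IH => [|k] IH.
  by exists 0; split => // j; rewrite ltnS leqn0 => /eqP ->.
have [i [Hi Hm]] := IH isT.
case: (leqP (g k.+1) (g i)) => H.
  exists i; split; first lia.
  by move=> j; rewrite ltnS leq_eqVlt => /orP [/eqP ->|/Hm].
exists k.+1; split => // j; rewrite ltnS leq_eqVlt => /orP [/eqP -> //|/Hm Hj].
lia.
Qed.

Lemma pot_acyclic S (h : V -> nat) : indeg_le1 S ->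
  (forall u v, (u, v) \in S -> h u < h v) -> Defs.acyclic S.
Proof.
move=> Hd Hh [v0 [vs [es [Hsz Hk Hu Hue Hc]]]].
set k := size vs.
have [i [Hi Hmax]] := argmax_nat (fun j => h (nth v0 vs j)) Hk.
set j := (i + k.-1) %% k.
have Hj : j < k by rewrite ltn_pmod.
have Hji : (j.+1) %% k = i.
  by rewrite /j -addn1 modnDml -addnA addn1 prednK // modnDr modn_small.
have := Hc i Hi; have := Hc j Hj; rewrite Hji /= => /andP [ejS ejJ] /andP [eiS eiJ].
have Hn : (i.+1 %% k) < k by rewrite ltn_pmod.
have Ei : nth (v0, v0) es i = (nth v0 vs (i.+1 %% k), nth v0 vs i).
  case/orP: eiJ => /eqP E //.
  move: eiS; rewrite E => /Hh; have := Hmax _ Hn; simpl.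
  move=> A B; exfalso; move: A B; rewrite /k; lia.
have Ej : nth (v0, v0) es j = (nth v0 vs j, nth v0 vs i).
  case/orP: ejJ => /eqP E //.
  move: ejS; rewrite E => /Hh; have := Hmax _ Hj; simpl.
  move=> A B; exfalso; move: A B; rewrite /k; lia.
have Eij : nth (v0, v0) es i = nth (v0, v0) es j.
  apply: (card_le1_eqP (Hd (nth v0 vs i))); by rewrite inE ?eiS ?ejS ?Ei ?Ej /=.
have : i == j by rewrite -(nth_uniq (v0, v0) _ _ Hue) ?Hsz // Eij.
move/eqP => Eq; move: ejS; rewrite Ej -Eq => /Hh; by rewrite ltnn.
Qed.


Lemma pot_of_forest S : Defs.acyclic S -> indeg_le1 S ->
  exists h : V -> nat, forall u v, (u, v) \in S -> h u < h v.
Proof.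
move=> Hac Hd; exists (fun v => ex_minn (par_term Hac v)) => u v uv.
case: (ex_minnP (par_term Hac u)) => a Ha Hmina.
case: (ex_minnP (par_term Hac v)) => b Hb Hminb.
case: b Hb Hminb => [|b] Hb _.
  by move/rootsP: Hb => /(_ _ uv); rewrite eqxx.
by rewrite ltnS; apply: Hmina; rewrite -(par_uniq Hd uv) -iterSr.
Qed.

Lemma sub_of_par S1 S2 : Defs.roots S1 = Defs.roots S2 -> indeg_le1 S1 ->
  par S1 =1 par S2 -> S1 \subset S2.
Proof.
move=> Hr Hd Hp; apply/subsetP => [[u v]] uv.
have Hv : v \notin Defs.roots S2.
  by rewrite -Hr; apply/negP => /rootsP /(_ _ uv); rewrite eqxx.
by have := parP Hv; rewrite -Hp (par_uniq Hd uv).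
Qed.

End Aux.

Theorem lemma2p6 (V : finType) (E : {set V * V}) (R : {set V}) :
  R != set0 ->
  has_several_maximal_faces (DT_R E R) ->
  exists x y : V, (x, y) \in E /\ nice (DT_R E R) x y.
Proof.
move=> _ [F1 [F2 [HM1 HM2 Hne]]].
pose RF T := directed_forest E T /\ Defs.roots T = R.
have rf_of_max : forall F, maximal_face (DT_R E R) F -> RF F.
  move=> F [[F' [Hdf Hr Hs]] M].
  have DF' : DT_R E R F' by exists F'; split.
  by have <- := M F' DF' Hs; split.
have [[HsubE1 Hac1 Hd1] Hr1] := rf_of_max _ HM1.
have [[HsubE2 Hac2 Hd2] Hr2] := rf_of_max _ HM2.
pose Wst w := forall T, RF T -> forall n, iter n (par T) w = iter n (par F1) w.
have HR : forall r, r \in R -> Wst r.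
  move=> r Hr T [_ HrT] n.
  have H1 : par F1 r = r by apply: par_root; rewrite Hr1.
  have H2 : par T r = r by apply: par_root; rewrite HrT.
  by rewrite !iter_fix.
have Hcl : forall a, Wst a -> Wst (par F1 a).
  move=> a Ha T HT n.
  have E1 := Ha T HT 1; simpl in E1.
  transitivity (iter n.+1 (par T) a); first by rewrite iterSr E1.
  by rewrite (Ha T HT n.+1) iterSr.
have Hit : forall n a, Wst a -> Wst (iter n (par F1) a).
  move=> n; elim: n => [|m IH] a Ha; first exact: Ha.
  by rewrite iterS; apply: Hcl; apply: IH.
have [w Hw] : exists w, ~ Wst w.
  apply: NNPP => Hall; move/negP: Hne; apply; apply/eqP.
  have Hp : par F1 =1 par F2.
    move=> v; have Hv : Wst v by apply: NNPP => Hv; apply: Hall; exists v.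
    by have := Hv F2 (conj (And3 HsubE2 Hac2 Hd2) Hr2) 1.
  apply/eqP; rewrite eqEsubset; apply/andP; split.
    by apply: sub_of_par; [rewrite Hr1 Hr2 | exact: Hd1 | exact: Hp].
  by apply: sub_of_par; [rewrite Hr1 Hr2 | exact: Hd2 | move=> v; rewrite Hp].
have step : forall n w, ~ Wst w -> Wst (iter n (par F1) w) ->
    exists y, ~ Wst y /\ Wst (par F1 y).
  elim=> [|n IH] w' Hw' Hn; first by case: (Hw' Hn).
  case: (classic (Wst (par F1 w'))) => H; first by exists w'.
  by apply: (IH (par F1 w')) => //; rewrite -iterSr.
have [n0 Hn0] := par_term Hac1 w.
have Hn0' : iter n0 (par F1) w \in R by rewrite -Hr1.
have [y [Hy Hx]] := step n0 w Hw (HR _ Hn0').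
have HyR : y \notin R by apply/negP => /HR.
set px := par F1 y.
have Hxy1 : (px, y) \in F1 by apply: parP; rewrite Hr1.
exists px; exists y; split; first exact: (subsetP HsubE1 _ Hxy1).
split.
  apply: NNPP => Hno; apply: Hy => T HT n.
  case: (eqVneq (par T y) px) => [Ex|Nx]; last first.
    exfalso; apply: Hno; exists (par T y); split => //.
    exists T; case: HT => HT1 HT2; split => //.
    by rewrite sub1set; apply: parP; rewrite HT2.
  case: n => [//|n]; rewrite !iterSr Ex.
  exact: Hx T HT n.
move=> F [T' [Hdf' Hr' Hs']] HFy.
have HT' : RF T' by split.
case: Hdf' => [HsubE' Hac' Hd'].
set T'' := [set e in T' | e.2 != y] :|: [set (px, y)].
have HxyT : (px, y) \in T'' by rewrite !inE eqxx orbT.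
have Hd'' : indeg_le1 T''.
  move=> v; case: (eqVneq v y) => [->|Nv].
    rewrite -(cards1 (px, y)); apply: subset_leq_card.
    apply/subsetP => e; rewrite !inE => /andP [/orP [/andP [_ Hne2] | ->] He2] //.
    by rewrite He2 in Hne2.
  apply: leq_trans _ (Hd' v); apply: subset_leq_card.
  apply/subsetP => e; rewrite !inE => /andP [/orP [/andP [eT _] | /eqP E0] He2].
    by rewrite eT He2.
  by rewrite E0 /= eq_sym (negPf Nv) in He2.
exists T''; split.
- split => //.
  + apply/subsetP => e; rewrite !inE => /orP [/andP [eT _]|/eqP ->].
      exact: (subsetP HsubE').
    exact: (subsetP HsubE1).
  + have [d Hdd] := pot_of_forest Hac' Hd'.
    pose D v := exists n, iter n (par T') v = y.
    have Hnx : ~ D px.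
      move=> [n Hn]; apply: Hy; rewrite -Hn /px (Hx T' HT' n).
      exact: Hit.
    pose h v := if excluded_middle_informative (D v) then d v + (d px).+1 else d v.
    apply: (pot_acyclic (h := h)) => // u v.
    rewrite !inE => /orP [/andP [uvT Nvy] | /eqP [Eu Ev]]; last first.
      rewrite Eu Ev /h /=.
      destruct (excluded_middle_informative (D px)) as [Dx|Dx]; first by case: Hnx.
      destruct (excluded_middle_informative (D y)) as [Dy|Dy]; last by case: Dy; exists 0.
      by rewrite /= addnS ltnS leq_addl.
    have Hpv := par_uniq Hd' uvT.
    rewrite /h /=; destruct (excluded_middle_informative (D u)) as [Du|Du];
      destruct (excluded_middle_informative (D v)) as [Dv|Dv]; rewrite /=.
    * by rewrite ltn_add2r; apply: Hdd.
    * exfalso; apply: Dv; case: Du => n Hn; exists n.+1.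
      by rewrite iterSr Hpv.
    * exfalso; apply: Du; case: Dv => [[|n] Hn].
        by simpl in Hn; rewrite /= Hn eqxx in Nvy.
      by exists n; rewrite -Hpv -iterSr.
    * exact: Hdd.
- apply/setP => v; rewrite -Hr'; apply/rootsP/rootsP => H e eS.
    have Nyv : y != v by have := H _ HxyT.
    case: (eqVneq e.2 y) => [->//|Ne].
    by apply: H; rewrite !inE eS Ne.
  move: eS; rewrite !inE => /orP [/andP [eT _]|/eqP ->]; first exact: H.
  apply/negP => /eqP /= Eyv; move: HyR; rewrite -Hr' Eyv => /negP; apply.
  by apply/rootsP.
- apply/subsetP => e; rewrite !inE => /orP [eF|->]; last by rewrite orbT.
  rewrite (subsetP Hs' e eF) /=.
  by have := (forallP HFy) e; rewrite eF /= => ->.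
Qed.
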